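(* Let $\Delta^{\mathcal T}_{\mathcal R}$ be any of the ten systems $\Delta^{\mathcal T}_{\equiv}$, $\Delta^{\mathcal T}_{=_\beta}$ ($\mathcal T\in\{CD,CDS,CDV,BCD\}$), $\Delta^{CDV}_{=_{\beta\eta}}$, $\Delta^{BCD}_{=_{\beta\eta}}$. For every strongly normalizing pure $\lambda$-term $M$ there exist a basis $B$, a type $\sigma$ and a $\Delta$-term $\Delta$ such that $\|\Delta\|\equiv M$ and $B\vdash^{\mathcal T}_{\mathcal R}\Delta:\sigma$.
   Context: Type atoms: a set $\mathbb{A}$ of symbols; $\omega$ denotes a distinguished atom (the universal type). $\mathbb{A}_\infty=\{\mathtt a_i\mid i\in\mathbb N\}$ with each $\mathtt a_i\neq\omega$, and $\mathbb{A}^\omega_\infty=\mathbb{A}_\infty\cup\{\omega\}$. Intersection types over $\mathbb A$: $\sigma::= a\mid\sigma\to\sigma\mid\sigma\cap\sigma$ ($a\in\mathbb A$). An intersection type theory $\mathcal T$ over $\mathbb A$ is a set of inequalities $\sigma\le\tau$ (written $\sigma\le_{\mathcal T}\tau$) closed under (refl) $\sigma\le\sigma$; (incl) $\sigma\cap\tau\le\sigma$ and $\sigma\cap\tau\le\tau$; (glb) $\rho\le\sigma$ and $\rho\le\tau$ imply $\rho\le\sigma\cap\tau$; (trans) $\sigma\le\tau$ and $\tau\le\rho$ imply $\sigma\le\rho$. Additional axioms/rules: $(\omega_{top})$ $\sigma\le\omega$; $(\omega_{\to})$ $\omega\le\sigma\to\omega$; $(\to\cap)$ $(\sigma\to\tau)\cap(\sigma\to\rho)\le\sigma\to(\tau\cap\rho)$;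 $(\to)$ $\sigma_2\le\sigma_1$ and $\tau_1\le\tau_2$ imply $\sigma_1\to\tau_1\le\sigma_2\to\tau_2$. $\mathcal T_{CD}$ = smallest type theory over $\mathbb A_\infty$; $\mathcal T_{CDS}$ = smallest over $\mathbb A^\omega_\infty$ containing $(\omega_{top})$; $\mathcal T_{CDV}$ = smallest over $\mathbb A_\infty$ closed under $(\to)$ and $(\to\cap)$; $\mathcal T_{BCD}$ = smallest over $\mathbb A^\omega_\infty$ closed under $(\to),(\to\cap),(\omega_{top}),(\omega_\to)$. We abbreviate these as CD, CDS, CDV, BCD. $\Delta$-terms: $\Delta::=u_\Delta\mid x\mid\lambda x{:}\sigma.\Delta\mid\Delta\,\Delta\mid\langle\Delta,\Delta\rangle\mid pr_1\Delta\mid pr_2\Delta\mid\Delta^\sigma$, where for every (not necessarily typable) $\Delta$-term $\Delta$ there is a constant $u_\Delta$. The essence $\|\Delta\|$ is the pure $\lambda$-term defined by $\|x\|=x$, $\|u_\Delta\|=\|\Delta\|$, $\|\Delta^\sigma\|=\|\Delta\|$, $\|\lambda x{:}\sigma.\Delta\|=\lambda x.\|\Delta\|$, $\|\Delta_1\Delta_2\|=\|\Delta_1\|\,\|\Delta_2\|$, $\|\langle\Delta_1,\Delta_2\rangle\|=\|\Delta_1\|$, $\|pr_i\Delta\|=\|\Delta\|$. Let $\mathcal R$ be one of $\equiv$ (syntactic identity up to $\alpha$), $=_\beta$, $=_{\beta\eta}$ on pure $\lambda$-terms. A basis $B$ is a finite set of declarations $x{:}\sigma$ with distinct variables. The typed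 system $\Delta^{\mathcal T}_{\mathcal R}$ derives $B\vdash^{\mathcal T}_{\mathcal R}\Delta:\sigma$ by: (top) $B\vdash u_\Delta:\omega$ if $\omega\in\mathbb A$; (ax) $B\vdash x:\sigma$ if $x{:}\sigma\in B$; ($\to$I) from $B,x{:}\sigma\vdash\Delta:\tau$ infer $B\vdash\lambda x{:}\sigma.\Delta:\sigma\to\tau$; ($\to$E) from $B\vdash\Delta_1:\sigma\to\tau$ and $B\vdash\Delta_2:\sigma$ infer $B\vdash\Delta_1\Delta_2:\tau$; ($\cap$I) from $B\vdash\Delta_1:\sigma$, $B\vdash\Delta_2:\tau$ and $\|\Delta_1\|\mathrel{\mathcal R}\|\Delta_2\|$ infer $B\vdash\langle\Delta_1,\Delta_2\rangle:\sigma\cap\tau$; ($\cap$E$_1$) from $B\vdash\Delta:\sigma\cap\tau$ infer $B\vdash pr_1\Delta:\sigma$; ($\cap$E$_2$) from $B\vdash\Delta:\sigma\cap\tau$ infer $B\vdash pr_2\Delta:\tau$; ($\le_{\mathcal T}$) from $B\vdash\Delta:\sigma$ and $\sigma\le_{\mathcal T}\tau$ infer $B\vdash\Delta^\tau:\tau$. We write $\Delta^{CD}_{\mathcal R}$ for $\Delta^{\mathcal T_{CD}}_{\mathcal R}$, etc. *)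

(* Defs.v *)
From Stdlib Require Import Arith List Relations.
Import ListNotations.

(** * Pure lambda-terms (de Bruijn indices; syntactic identity = alpha-equivalence) *)
Inductive term : Type :=
| Var : nat -> term
| Lam : term -> term
| App : term -> term -> term.

Fixpoint lift (k c : nat) (t : term) : term :=
  match t with
  | Var n => Var (if n <? c then n else n + k)
  | Lam t1 => Lam (lift k (S c) t1)
  | App t1 t2 => App (lift k c t1) (lift k c t2)
  end.

Fixpoint subst (j : nat) (N : term) (t : term) : term :=
  match t with
  | Var n => if n =? j then lift j 0 N else if j <? n then Var (pred n) else Var n
  | Lam t1 => Lam (subst (S j) N t1)
  | App t1 t2 => App (subst j N t1) (subst j N t2)
  end.

Inductive compat (r : term -> term -> Prop) : term -> term -> Prop :=
| compat_root M N : r M N -> compat r M N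
| compat_lam M N : compat r M N -> compat r (Lam M) (Lam N)
| compat_appl M M' N : compat r M M' -> compat r (App M N) (App M' N)
| compat_appr M N N' : compat r N N' -> compat r (App M N) (App M N').

Inductive beta_root : term -> term -> Prop :=
| beta_root_intro M N : beta_root (App (Lam M) N) (subst 0 N M).

Inductive eta_root : term -> term -> Prop :=
| eta_root_intro M : eta_root (Lam (App (lift 1 0 M) (Var 0))) M.

Definition beta_step : term -> term -> Prop := compat beta_root.
Definition beta_eta_step : term -> term -> Prop :=
  compat (fun M N => beta_root M N \/ eta_root M N).

Definition beta_eq : term -> term -> Prop := clos_refl_sym_trans term beta_step.
Definition beta_eta_eq : term -> term -> Prop := clos_refl_sym_trans term beta_eta_step.

Definition SN (M : term) : Prop := Acc (fun N M => beta_step M N) M.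

Inductive ty (A : Type) : Type :=
| Atom : A -> ty A
| Arr : ty A -> ty A -> ty A
| Inter : ty A -> ty A -> ty A.
Arguments Atom {A}. Arguments Arr {A}. Arguments Inter {A}.

(** The smallest type theory over [A] closed under the selected rules.
    [om = Some w] : the atom set contains omega (= w) and (omega_top) holds.
    [arr = true]  : closure under (->) and (-> cap).
    (omega_->) is included exactly when both hold (BCD). *)
Inductive tle {A : Type} (om : option A) (arr : bool) : ty A -> ty A -> Prop :=
| tle_refl s : tle om arr s s
| tle_incl_l s t : tle om arr (Inter s t) s
| tle_incl_r s t : tle om arr (Inter s t) t
| tle_glb r s t : tle om arr r s -> tle om arr r t -> tle om arr r (Inter s t)
| tle_trans s t r : tle om arr s t -> tle om arr t r -> tle om arr s r
| tle_omega_top w s : om = Some w -> tle om arr s (Atom w)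
| tle_omega_arr w s : om = Some w -> arr = true ->
    tle om arr (Atom w) (Arr s (Atom w))
| tle_arr_inter s t r : arr = true ->
    tle om arr (Inter (Arr s t) (Arr s r)) (Arr s (Inter t r))
| tle_arr s1 s2 t1 t2 : arr = true -> tle om arr s2 s1 -> tle om arr t1 t2 ->
    tle om arr (Arr s1 t1) (Arr s2 t2).

(** * Delta-terms (de Bruijn); [DU d] is the constant u_d. *)
Inductive dterm (A : Type) : Type :=
| DU : dterm A -> dterm A
| DVar : nat -> dterm A
| DLam : ty A -> dterm A -> dterm A
| DApp : dterm A -> dterm A -> dterm A
| DPair : dterm A -> dterm A -> dterm A
| DPr1 : dterm A -> dterm A
| DPr2 : dterm A -> dterm A
| DAnn : dterm A -> ty A -> dterm A.
Arguments DU {A}. Arguments DVar {A}. Arguments DLam {A}. Arguments DApp {A}.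
Arguments DPair {A}. Arguments DPr1 {A}. Arguments DPr2 {A}. Arguments DAnn {A}.

Fixpoint essence {A : Type} (d : dterm A) : term :=
  match d with
  | DU d1 => essence d1
  | DVar n => Var n
  | DLam _ d1 => Lam (essence d1)
  | DApp d1 d2 => App (essence d1) (essence d2)
  | DPair d1 _ => essence d1
  | DPr1 d1 => essence d1
  | DPr2 d1 => essence d1
  | DAnn d1 _ => essence d1
  end.

(** Typing.  A basis is a list: index [n] is declared with type [nth n B]. *)
Inductive typed {A : Type} (om : option A) (arr : bool) (R : term -> term -> Prop)
  : list (ty A) -> dterm A -> ty A -> Prop :=
| ty_top B d w : om = Some w -> typed om arr R B (DU d) (Atom w)
| ty_ax B n s : nth_error B n = Some s -> typed om arr R B (DVar n) s
| ty_absI B s d t : typed om arr R (s :: B) d t -> typed om arr R B (DLam s d) (Arr s t)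
| ty_appE B d1 d2 s t : typed om arr R B d1 (Arr s t) -> typed om arr R B d2 s ->
    typed om arr R B (DApp d1 d2) t
| ty_interI B d1 d2 s t : typed om arr R B d1 s -> typed om arr R B d2 t ->
    R (essence d1) (essence d2) -> typed om arr R B (DPair d1 d2) (Inter s t)
| ty_interE1 B d s t : typed om arr R B d (Inter s t) -> typed om arr R B (DPr1 d) s
| ty_interE2 B d s t : typed om arr R B d (Inter s t) -> typed om arr R B (DPr2 d) t
| ty_le B d s t : typed om arr R B d s -> tle om arr s t -> typed om arr R B (DAnn d t) t.

Inductive theory : Type := CD | CDS | CDV | BCD.

(** A_infty = nat ; A_infty^omega = option nat with omega = None. *)
Definition atoms (T : theory) : Type :=
  match T with CD | CDV => nat | CDS | BCD => option nat end.

Definition omega_of (T : theory) : option (atoms T) :=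
  match T return option (atoms T) with
  | CD => None | CDV => None | CDS => Some None | BCD => Some None
  end.

Definition arrows_of (T : theory) : bool :=
  match T with CD | CDS => false | CDV | BCD => true end.

Inductive rel : Type := RSyn | RBeta | RBetaEta.

Definition rel_of (r : rel) : term -> term -> Prop :=
  match r with RSyn => @eq term | RBeta => beta_eq | RBetaEta => beta_eta_eq end.

Definition considered (T : theory) (r : rel) : Prop :=
  match r with
  | RSyn | RBeta => True
  | RBetaEta => T = CDV \/ T = BCD
  end.

Definition derivable (T : theory) (r : rel)
  (B : list (ty (atoms T))) (d : dterm (atoms T)) (s : ty (atoms T)) : Prop :=
  typed (omega_of T) (arrows_of T) (rel_of r) B d s.

(* Main.v *)
Require Import Defs.
From Stdlib Require Import List Arith Lia Relations Wellfounded.Transitive_Closure.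
Import ListNotations.

Inductive CT {A : Type} : list (ty A) -> term -> ty A -> Prop :=
| ct_var G n s : nth_error G n = Some s -> CT G (Var n) s
| ct_lam G s M t : CT (s::G) M t -> CT G (Lam M) (Arr s t)
| ct_app G M N s t : CT G M (Arr s t) -> CT G N s -> CT G (App M N) t
| ct_inter G M s t : CT G M s -> CT G M t -> CT G M (Inter s t)
| ct_sub G M s t : CT G M s -> tle None false s t -> CT G M t.

Definition basis_le {A} (G' G : list (ty A)) : Prop :=
  forall n s, nth_error G n = Some s -> exists s', nth_error G' n = Some s' /\ tle None false s' s.

Lemma basis_le_hd {A} (a b : ty A) G' G : tle None false a b -> basis_le G' G -> basis_le (a::G') (b::G).
Proof. intros Hab H [|n] s Hs; simpl in *. inversion Hs; subst; eauto. auto. Qed.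

Lemma basis_le_refl {A} (G : list (ty A)) : basis_le G G.
Proof. intros n s Hs; exists s; split; auto; constructor. Qed.

Lemma basis_le_mid {A} (Hb K : list (ty A)) a b : tle None false a b -> basis_le (Hb ++ a :: K) (Hb ++ b :: K).
Proof. induction Hb; simpl; intros; apply basis_le_hd; auto using basis_le_refl; constructor. Qed.

Lemma weaken {A} : forall G M (t : ty A), CT G M t -> forall G', basis_le G' G -> CT G' M t.
Proof.
  induction 1; intros G' HG.
  - destruct (HG _ _ H) as (s' & H1 & H2). eapply ct_sub; [constructor; eauto | auto].
  - constructor. apply IHCT. apply basis_le_hd; auto; constructor.
  - econstructor; eauto.
  - constructor; auto.
  - eapply ct_sub; eauto.
Qed.

Fixpoint merge {A} (G1 G2 : list (ty A)) : list (ty A) :=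
  match G1, G2 with
  | [], _ => G2
  | _, [] => G1
  | a::x, b::y => Inter a b :: merge x y
  end.

Lemma merge_l {A} : forall (G1 G2 : list (ty A)), basis_le (merge G1 G2) G1.
Proof.
  induction G1; intros [|b y]; simpl.
  - apply basis_le_refl.
  - intros [|n] s H; discriminate.
  - apply basis_le_refl.
  - apply basis_le_hd; auto. constructor.
Qed.

Lemma merge_r {A} : forall (G1 G2 : list (ty A)), basis_le (merge G1 G2) G2.
Proof.
  induction G1; intros [|b y]; simpl.
  - apply basis_le_refl.
  - apply basis_le_refl.
  - intros [|n] s H; discriminate.
  - apply basis_le_hd; auto. constructor.
Qed.

Lemma lift_var k c Y n : lift k c Y = Var n -> exists m, Y = Var m /\ n = (if m <? c then m else m + k).
Proof. destruct Y; simpl; intro H; inversion H; eauto. Qed.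
Lemma lift_lam k c Y X : lift k c Y = Lam X -> exists Y1, Y = Lam Y1 /\ X = lift k (S c) Y1.
Proof. destruct Y; simpl; intro H; inversion H; eauto. Qed.
Lemma lift_app k c Y X1 X2 : lift k c Y = App X1 X2 -> exists Y1 Y2, Y = App Y1 Y2 /\ X1 = lift k c Y1 /\ X2 = lift k c Y2.
Proof. destruct Y; simpl; intro H; inversion H; eauto. Qed.

Lemma strengthen {A} : forall G X (t : ty A), CT G X t ->
  forall Aa Hb K Y, G = Aa ++ Hb ++ K -> X = lift (length Hb) (length Aa) Y -> CT (Aa ++ K) Y t.
Proof.
  induction 1; intros Aa Hb K Y HG HX; subst G.
  - symmetry in HX. destruct (lift_var _ _ _ _ HX) as (m & -> & ->). constructor.
    destruct (Nat.ltb_spec m (length Aa)).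
    + rewrite nth_error_app1 in H by lia. rewrite nth_error_app1 by lia. auto.
    + rewrite nth_error_app2 in H by lia. rewrite nth_error_app2 in H by lia.
      rewrite nth_error_app2 by lia. replace (m - length Aa) with (m + length Hb - length Aa - length Hb) by lia. auto.
  - symmetry in HX. destruct (lift_lam _ _ _ _ HX) as (Y1 & -> & ->). constructor.
    apply (IHCT (s::Aa) Hb K); auto.
  - symmetry in HX. destruct (lift_app _ _ _ _ _ HX) as (Y1 & Y2 & -> & -> & ->). econstructor; eauto.
  - constructor; eauto.
  - eapply ct_sub; eauto.
Qed.

Lemma varj {A} N : forall (Hb K : list (ty A)) t, CT (Hb++K) (lift (length Hb) 0 N) t ->
  exists ρ, CT (Hb ++ ρ::K) (Var (length Hb)) t /\ CT K N ρ.
Proof.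
  intros Hb K t H. exists t. split.
  - constructor. rewrite nth_error_app2 by lia. rewrite Nat.sub_diag. reflexivity.
  - apply (strengthen _ _ _ H [] Hb K N); reflexivity.
Qed.

Lemma subst_exp {A} (N : term) : forall G X (t : ty A), CT G X t ->
  forall Hb K M ρ0, G = Hb ++ K -> X = subst (length Hb) N M -> CT K N ρ0 ->
  exists ρ, CT (Hb ++ ρ::K) M t /\ CT K N ρ.
Proof.
  induction 1; intros Hb K Mx ρ0 HG HX HN; subst G.
  - destruct Mx as [m| |]; simpl in HX; try discriminate.
    destruct (Nat.eqb_spec m (length Hb)).
    + subst m. apply varj. rewrite <- HX. constructor; auto.
    + exists ρ0; split; auto. constructor.
      destruct (Nat.ltb_spec (length Hb) m); inversion HX; subst.
      * rewrite nth_error_app2 in H by lia. rewrite nth_error_app2 by lia.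
        replace (m - length Hb) with (S (Nat.pred m - length Hb)) by lia. auto.
      * rewrite nth_error_app1 in H by lia. rewrite nth_error_app1 by lia. auto.
  - destruct Mx as [m| M1 |]; simpl in HX; try discriminate.
    + destruct (Nat.eqb_spec m (length Hb)).
      * subst m. apply varj. rewrite <- HX. constructor; auto.
      * destruct (Nat.ltb_spec (length Hb) m); discriminate.
    + inversion HX; subst. destruct (IHCT (s::Hb) K M1 ρ0) as (ρ & H1 & H2); auto.
      exists ρ; split; auto. constructor; auto.
  - destruct Mx as [m| | M1 M2]; simpl in HX; try discriminate.
    + destruct (Nat.eqb_spec m (length Hb)).
      * subst m. apply varj. rewrite <- HX. econstructor; eauto.
      * destruct (Nat.ltb_spec (length Hb) m); discriminate.
    + inversion HX; subst.
      destruct (IHCT1 Hb K M1 ρ0) as (ρ1 & H1 & H2); auto.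
      destruct (IHCT2 Hb K M2 ρ0) as (ρ2 & H3 & H4); auto.
      exists (Inter ρ1 ρ2); split; [|constructor; auto].
      econstructor; eapply weaken; eauto; apply basis_le_mid; constructor.
  - destruct (IHCT1 Hb K Mx ρ0) as (ρ1 & H1 & H2); auto.
    destruct (IHCT2 Hb K Mx ρ0) as (ρ2 & H3 & H4); auto.
    exists (Inter ρ1 ρ2); split; [|constructor; auto].
    constructor; eapply weaken; eauto; apply basis_le_mid; constructor.
  - destruct (IHCT Hb K Mx ρ0) as (ρ & H1 & H2); auto.
    exists ρ; split; auto. eapply ct_sub; eauto.
Qed.
Fixpoint apps (h : term) (Ps : list term) : term :=
  match Ps with [] => h | P :: Ps => apps (App h P) Ps end.

Lemma apps_snoc : forall Ps h P, apps h (Ps ++ [P]) = App (apps h Ps) P.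
Proof. induction Ps; simpl; auto. Qed.

Definition notapp (h : term) : Prop := match h with App _ _ => False | _ => True end.

Lemma decomp : forall M, exists h Ps, M = apps h Ps /\ notapp h.
Proof.
  induction M.
  - exists (Var n), []; simpl; auto.
  - exists (Lam M), []; simpl; auto.
  - destruct IHM1 as (h & Ps & -> & Hh). exists h, (Ps ++ [M2]). rewrite apps_snoc; auto.
Qed.

Fixpoint arrs {A} (ss : list (ty A)) (t : ty A) : ty A :=
  match ss with [] => t | s :: ss => Arr s (arrs ss t) end.

Lemma apps_typ {A} : forall Ps (ss : list (ty A)) G h t, CT G h (arrs ss t) -> Forall2 (CT G) Ps ss -> CT G (apps h Ps) t.
Proof.
  induction Ps; intros ss G h t H HF; inversion HF; subst; simpl in *; auto.
  eapply IHPs; eauto. econstructor; eauto.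
Qed.

Lemma apps_cong {A} : forall Ps (G : list (ty A)) F F', (forall u, CT G F u -> CT G F' u) ->
  forall t, CT G (apps F Ps) t -> CT G (apps F' Ps) t.
Proof.
  induction Ps; simpl; auto. intros G F F' HF. apply IHPs.
  intros u Hu. revert HF. remember (App F a) as X. induction Hu; intros HF; inversion HeqX; subst.
  - econstructor; eauto.
  - constructor; auto.
  - eapply ct_sub; eauto.
Qed.

Lemma head_exp {A} : forall (G : list (ty A)) N M ρ0, CT G N ρ0 ->
  forall u, CT G (subst 0 N M) u -> CT G (App (Lam M) N) u.
Proof.
  intros G N M ρ0 HN u Hu.
  destruct (subst_exp N G _ u Hu [] G M ρ0 eq_refl eq_refl HN) as (ρ & H1 & H2).
  econstructor; [constructor; exact H1 | exact H2].
Qed.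

Definition imm (y x : term) : Prop :=
  x = Lam y \/ (exists z, x = App y z) \/ (exists z, x = App z y).
Definition prec (y x : term) : Prop := beta_step x y \/ imm y x.
Definition subt := clos_refl_trans term imm.

Lemma ctx : forall y M, subt y M -> forall z, beta_step y z -> exists M', beta_step M M' /\ subt z M'.
Proof.
  intros y M H. induction H; intros z0 Hz.
  - destruct H as [-> | [[w ->] | [w ->]]].
    + exists (Lam z0); split; [apply compat_lam; auto | apply rt_step; left; auto].
    + exists (App z0 w); split; [apply compat_appl; auto | apply rt_step; right; left; eauto].
    + exists (App w z0); split; [apply compat_appr; auto | apply rt_step; right; right; eauto].
  - exists z0; split; auto. apply rt_refl.
  - destruct (IHclos_refl_trans1 z0 Hz) as (M1 & H1 & H2).
    destruct (IHclos_refl_trans2 M1 H1) as (M2 & H3 & H4).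
    exists M2; split; auto. eapply rt_trans; eauto.
Qed.

Lemma sn_acc : forall M, SN M -> forall y, subt y M -> Acc prec y.
Proof.
  intros M HSN. induction HSN as [M _ IH].
  intros y. induction y; intros Hs; constructor; intros z [Hz | Hz].
  - destruct (ctx _ _ Hs _ Hz) as (M' & H1 & H2). eapply IH; eauto.
  - destruct Hz as [Hz | [[w Hz] | [w Hz]]]; discriminate.
  - destruct (ctx _ _ Hs _ Hz) as (M' & H1 & H2). eapply IH; eauto.
  - destruct Hz as [Hz | [[w Hz] | [w Hz]]]; inversion Hz; subst.
    apply IHy. eapply rt_trans; [apply rt_step; left; reflexivity | auto].
  - destruct (ctx _ _ Hs _ Hz) as (M' & H1 & H2). eapply IH; eauto.
  - destruct Hz as [Hz | [[w Hz] | [w Hz]]]; inversion Hz; subst.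
    + apply IHy1. eapply rt_trans; [apply rt_step; right; left; eauto | auto].
    + apply IHy2. eapply rt_trans; [apply rt_step; right; right; eauto | auto].
Qed.

Lemma sub_apps : forall Ps h y, clos_trans term prec y h -> clos_trans term prec y (apps h Ps).
Proof.
  induction Ps; simpl; auto. intros h y H. apply IHPs.
  eapply t_trans; eauto. apply t_step. right; right; left; eauto.
Qed.

Lemma in_apps : forall Ps h P, In P Ps -> clos_trans term prec P (apps h Ps).
Proof.
  induction Ps; simpl; intros h P HI; [contradiction|]. destruct HI as [-> | HI]; auto.
  apply sub_apps. apply t_step. right; right; right; eauto.
Qed.

Lemma beta_apps : forall Ps a b, beta_step a b -> beta_step (apps a Ps) (apps b Ps).
Proof. induction Ps; simpl; auto. intros. apply IHPs. apply compat_appl; auto. Qed.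

Definition typable (M : term) : Prop := exists (G : list (ty nat)) s, CT G M s.

Lemma collect : forall Ps, (forall P, In P Ps -> typable P) ->
  exists (G : list (ty nat)) ss, Forall2 (CT G) Ps ss.
Proof.
  induction Ps; intros H.
  - exists [], []; constructor.
  - destruct (H a (or_introl eq_refl)) as (G1 & s1 & H1).
    destruct IHPs as (G2 & ss & H2). intros; apply H; simpl; auto.
    exists (merge G1 G2), (s1 :: ss). constructor.
    + eapply weaken; eauto. apply merge_l.
    + eapply Forall2_impl; [|exact H2]. intros; eapply weaken; eauto. apply merge_r.
Qed.

Definition single (n : nat) (s : ty nat) : list (ty nat) := repeat (Atom 0) n ++ [s].

Lemma single_nth n s : nth_error (single n s) n = Some s.
Proof.
  unfold single. rewrite nth_error_app2; rewrite repeat_length; [|lia]. rewrite Nat.sub_diag; reflexivity.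
Qed.

Lemma typ_acc : forall M, Acc (clos_trans term prec) M -> typable M.
Proof.
  intros M Hacc. induction Hacc as [M _ IH].
  destruct (decomp M) as (h & Ps & -> & Hh).
  destruct h as [n | M1 | h1 h2]; [ | | contradiction].
  - destruct (collect Ps) as (G & ss & HF).
    { intros P HP. apply IH. apply in_apps; auto. }
    exists (merge G (single n (arrs ss (Atom 0)))), (Atom 0).
    eapply apps_typ.
    + eapply weaken; [constructor; apply single_nth | apply merge_r].
    + eapply Forall2_impl; [|exact HF]. intros; eapply weaken; eauto. apply merge_l.
  - destruct Ps as [| N Ps']; simpl.
    + destruct (IH M1) as (G & t & H).
      { apply t_step. right; left; reflexivity. }
      assert (H' : CT (merge G [Atom 0]) M1 t) by (eapply weaken; eauto; apply merge_l).
      destruct (merge G [Atom 0]) as [|s G'] eqn:E.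
      { destruct G; discriminate. }
      exists G', (Arr s t). constructor; auto.
    + destruct (IH N) as (G1 & ρ0 & H1).
      { apply (in_apps (N :: Ps') (Lam M1)); simpl; auto. }
      destruct (IH (apps (subst 0 N M1) Ps')) as (G2 & t & H2).
      { apply t_step. left. simpl. apply beta_apps. apply compat_root. constructor. }
      exists (merge G1 G2), t.
      eapply apps_cong; [| eapply weaken; [exact H2 | apply merge_r]].
      intros u Hu. eapply head_exp; [|exact Hu]. eapply weaken; [exact H1 | apply merge_l].
Qed.

Lemma sn_typable : forall M, SN M -> typable M.
Proof.
  intros M H. apply typ_acc. apply Acc_clos_trans. apply (sn_acc M H). apply rt_refl.
Qed.

Lemma tle_mono {A} (om : option A) arr : forall s t, tle None false s t -> tle om arr s t.
Proof. induction 1; try discriminate; econstructor; eauto. Qed.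

Lemma translate {A} (om : option A) arr (R : term -> term -> Prop) (Hr : forall x, R x x) :
  forall G M t, CT G M t -> exists d, essence d = M /\ typed om arr R G d t.
Proof.
  induction 1.
  - exists (DVar n); split; auto. constructor; auto.
  - destruct IHCT as (d & <- & Hd). exists (DLam s d); split; auto. constructor; auto.
  - destruct IHCT1 as (d1 & <- & H1). destruct IHCT2 as (d2 & <- & H2).
    exists (DApp d1 d2); split; auto. econstructor; eauto.
  - destruct IHCT1 as (d1 & E1 & H1). destruct IHCT2 as (d2 & E2 & H2).
    exists (DPair d1 d2); split; auto. constructor; auto. rewrite E1, E2; auto.
  - destruct IHCT as (d & E & Hd). exists (DAnn d t); split; auto. econstructor; eauto. apply tle_mono; auto.
Qed.

Fixpoint emb {A} (a : ty A) (M : term) : dterm A :=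
  match M with Var n => DVar n | Lam M1 => DLam a (emb a M1) | App M1 M2 => DApp (emb a M1) (emb a M2) end.

Lemma emb_ess {A} (a : ty A) M : essence (emb a M) = M.
Proof. induction M; simpl; congruence. Qed.

Lemma rel_refl r : forall x, rel_of r x x.
Proof. destruct r; simpl; intros; try reflexivity; apply rst_refl. Qed.

Theorem mainTheorem15 :
  forall (T : theory) (r : rel), considered T r ->
  forall M : term, SN M ->
  exists (B : list (ty (atoms T))) (s : ty (atoms T)) (d : dterm (atoms T)),
    essence d = M /\ derivable T r B d s.
Proof.
  intros T r _ M HSN.
  destruct T.
  - destruct (sn_typable M HSN) as (G & s & H).
    destruct (translate None false (rel_of r) (rel_refl r) G M s H) as (d & E & Hd).
    exists G, s, d; split; auto.
  - exists [], (Atom None), (DU (emb (Atom None) M)). split.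
    + simpl. apply emb_ess.
    + constructor. reflexivity.
  - destruct (sn_typable M HSN) as (G & s & H).
    destruct (translate None true (rel_of r) (rel_refl r) G M s H) as (d & E & Hd).
    exists G, s, d; split; auto.
  - exists [], (Atom None), (DU (emb (Atom None) M)). split.
    + simpl. apply emb_ess.
    + constructor. reflexivity.
Qed.
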